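(* Let $\mathcal{S}\subseteq\{0,1\}^n$ be comonotone, let $\mathcal{P}=\{x\in\mathbb{R}^n: Mx\le b\}$ with $M\in\mathbb{R}^{m\times n}$, $b\in\mathbb{R}^m$, and let $\mathcal{X}=\mathcal{S}\cap\mathcal{P}$ satisfy $\operatorname{conv}(\mathcal{S}\cap\mathcal{P})=\operatorname{conv}(\mathcal{S})\cap\mathcal{P}$. Then for every $v\in\mathbb{R}^n$ there exists $\gamma\in\mathbb{R}^m_+$ such that, for all $\bar x$: $\bar x\in\arg\max_{x\in\mathcal{X}}v^\top x$ if and only if $$\bar x\in\mathcal{X}\cap\mathcal{P}_=(\gamma)\cap\arg\max_{x\in\mathcal{S}}(v-M^\top\gamma)^\top x,$$ where $\mathcal{P}_=(\gamma)=\{x\in\mathbb{R}^n: (Mx)_i=b_i\ \text{for all } i\in[m]\text{ with }\gamma_i\neq0\}$.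
   Context: $\Pi_n$ is the set of permutations of $[n]$; for $\pi\in\Pi_n$, $\mathcal{Z}(\pi)=\{x\in\mathbb{R}^n: x_{\pi(1)}\ge\cdots\ge x_{\pi(n)}\}$. A set $\mathcal{S}\subseteq\mathbb{R}^n$ is comonotone if there is a map $\Psi:\Pi_n\to\Pi_n$ such that for every $\pi\in\Pi_n$ and every $v\in\mathcal{Z}(\pi)$, whenever $\max_{x\in\mathcal{S}}v^\top x$ attains its optimum, it has an optimal solution in $\mathcal{Z}(\Psi(\pi))$. *)

(* Defs.v *)
From HB Require Import structures.
From mathcomp Require Import all_boot all_order all_algebra perm.
From mathcomp Require Import reals.
Set Implicit Arguments. Unset Strict Implicit. Unset Printing Implicit Defensive.
Import Order.TTheory GRing.Theory Num.Theory.
Local Open Scope ring_scope.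

Section Defs.
Variable R : realType.
Variable n : nat.

Definition dotv (u x : 'cV[R]_n) : R := \sum_(i < n) u i 0 * x i 0.

Definition Zcone (pi : {perm 'I_n}) (x : 'cV[R]_n) : Prop :=
  forall i j : 'I_n, (i <= j)%N -> x (pi j) 0 <= x (pi i) 0.

Definition is_argmax (A : 'cV[R]_n -> Prop) (v x : 'cV[R]_n) : Prop :=
  A x /\ forall y, A y -> dotv v y <= dotv v x.

Definition comonotone (S : 'cV[R]_n -> Prop) : Prop :=
  exists Psi : {perm 'I_n} -> {perm 'I_n},
    forall (pi : {perm 'I_n}) (v : 'cV[R]_n), Zcone pi v ->
      (exists x, is_argmax S v x) ->
      exists x, is_argmax S v x /\ Zcone (Psi pi) x.

Definition conv (A : 'cV[R]_n -> Prop) (x : 'cV[R]_n) : Prop :=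
  exists (k : nat) (lam : 'I_k -> R) (pts : 'I_k -> 'cV[R]_n),
    (forall i, 0 <= lam i) /\ \sum_(i < k) lam i = 1 /\
    (forall i, A (pts i)) /\ x = \sum_(i < k) lam i *: pts i.

Definition binary_set (S : 'cV[R]_n -> Prop) : Prop :=
  forall x, S x -> forall i, x i 0 = 0 \/ x i 0 = 1.

Variable m : nat.
Definition polyhedron (M : 'M[R]_(m, n)) (b : 'cV[R]_m) (x : 'cV[R]_n) : Prop :=
  forall i : 'I_m, (M *m x) i 0 <= b i 0.

Definition polyEq (M : 'M[R]_(m, n)) (b : 'cV[R]_m) (g : 'cV[R]_m)
  (x : 'cV[R]_n) : Prop :=
  forall i : 'I_m, g i 0 != 0 -> (M *m x) i 0 = b i 0.
End Defs.

(* Main.v *)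
From Stdlib Require List Classical ClassicalEpsilon.
Require Import Defs.
From HB Require Import structures.
From mathcomp Require Import all_boot all_order all_algebra perm.
From mathcomp Require Import reals.
From mathcomp Require Import ring lra.
Set Implicit Arguments. Unset Strict Implicit. Unset Printing Implicit Defensive.
Import Order.TTheory GRing.Theory Num.Theory.
Local Open Scope ring_scope.
Section Farkas.
Variable R : realFieldType.

Definition cstr := ((nat -> R) * R)%type.
Definition lhs (d : nat) (a g : nat -> R) := \sum_(j < d) a j * g j.
Definition sat d (g : nat -> R) (p : cstr) := lhs d p.1 g <= p.2.

Inductive cone (l : seq cstr) : cstr -> Prop :=
| cone_in p : List.In p l -> cone l p
| cone_add p q : cone l p -> cone l q -> cone l (fun j => p.1 j + q.1 j, p.2 + q.2)
| cone_scale a p : 0 <= a -> cone l p -> cone l (fun j => a * p.1 j, a * p.2).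

Lemma cone_sub l l' : (forall p, List.In p l' -> cone l p) ->
  forall p, cone l' p -> cone l p.
Proof.
move=> H p; elim=> [q /H //|q r _ Hq _ Hr|a q a0 _ Hq].
- exact: cone_add.
- exact: cone_scale.
Qed.

Definition comb d (p q : cstr) : cstr :=
  (fun j => (- q.1 d) * p.1 j + p.1 d * q.1 j, (- q.1 d) * p.2 + p.1 d * q.2).

Definition newsys d (l : seq cstr) : seq cstr :=
  List.filter (fun p => p.1 d == 0) l ++
  List.flat_map (fun p => List.map (comb d p) (List.filter (fun q => q.1 d < 0) l))
    (List.filter (fun p => 0 < p.1 d) l).

Lemma newsys_in d l p : List.In p (newsys d l) ->
  cone l p /\ p.1 d = 0.
Proof.
rewrite /newsys List.in_app_iff List.filter_In; case=> [[Hp /eqP Hd]|].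
  by split=> //; apply: cone_in.
case/List.in_flat_map => p1 [/List.filter_In [Hp1 Hpos]].
case/List.in_map_iff => q1 [<- /List.filter_In [Hq1 Hneg]].
split.
  apply: (cone_add (cone_scale _ (cone_in Hp1)) (cone_scale _ (cone_in Hq1))).
    by rewrite oppr_ge0 ltW.
  exact: ltW.
by rewrite /comb /= mulNr (mulrC (p1.1 d)) addNr.
Qed.

Lemma cone_newsys d l p : cone (newsys d l) p -> cone l p /\ p.1 d = 0.
Proof.
elim=> [q /newsys_in //|q r _ [Hq Hqd] _ [Hr Hrd]|a q a0 _ [Hq Hqd]].
- by split; [apply: cone_add|rewrite /= Hqd Hrd addr0].
- by split; [apply: cone_scale|rewrite /= Hqd mulr0].
Qed.

Definition maxl (s : seq R) (x0 : R) := foldr Num.max x0 s.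
Definition minl (s : seq R) (x0 : R) := foldr Num.min x0 s.

Lemma maxl_ge s x0 u : List.In u s -> u <= maxl s x0.
Proof. elim: s => //= a s IH [->|/IH H]; rewrite le_max ?lexx //. by rewrite H orbT. Qed.
Lemma maxl_ge0 s x0 : x0 <= maxl s x0.
Proof. by elim: s => /= [|a s IH]; rewrite ?lexx // le_max IH orbT. Qed.
Lemma maxl_le s x0 B : x0 <= B -> (forall u, List.In u s -> u <= B) -> maxl s x0 <= B.
Proof.
move=> H0; elim: s => //= a s IH H; rewrite ge_max.
rewrite (H a); last by left.
by rewrite IH // => u Hu; apply: H; right.
Qed.
Lemma minl_le s x0 u : List.In u s -> minl s x0 <= u.
Proof. elim: s => //= a s IH [->|/IH H]; rewrite ge_min ?lexx //. by rewrite H orbT. Qed.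

Lemma lhs_lin d (a b : R) (p q : nat -> R) g :
  lhs d (fun j => a * p j + b * q j) g = a * lhs d p g + b * lhs d q g.
Proof.
rewrite /lhs !big_distrr -big_split /=; apply: eq_bigr => i _.
by rewrite mulrDl !mulrA.
Qed.

Lemma lhs_ext d (p : nat -> R) g t :
  lhs d.+1 p (fun j => if j == d then t else g j) = lhs d p g + p d * t.
Proof.
rewrite /lhs big_ord_recr /= eqxx; congr (_ + _).
apply: eq_bigr => i _ /=; by rewrite ltn_eqF.
Qed.

Lemma extend d l g : (forall p, List.In p (newsys d l) -> sat d g p) ->
  exists g', forall p, List.In p l -> sat d.+1 g' p.
Proof.
move=> Hg.
pose pos := List.filter (fun p : cstr => 0 < p.1 d) l.
pose neg := List.filter (fun q : cstr => q.1 d < 0) l.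
pose U := fun p : cstr => (p.2 - lhs d p.1 g) / p.1 d.
pose L := fun q : cstr => (lhs d q.1 g - q.2) / (- q.1 d).
pose t := maxl (List.map L neg) (minl (List.map U pos) 0).
have LU : forall p q, List.In p pos -> List.In q neg -> L q <= U p.
  move=> p q Hp Hq.
  have Hc : List.In (comb d p q) (newsys d l).
    rewrite /newsys List.in_app_iff; right.
    apply/List.in_flat_map; exists p; split=> //.
    by apply/List.in_map_iff; exists q.
  move: (Hg _ Hc); rewrite /sat /comb /= lhs_lin.
  move: Hp Hq => /List.filter_In [_ pd] /List.filter_In [_ qd].
  have qd' : 0 < - q.1 d by rewrite oppr_gt0.
  rewrite /L /U ler_pdivrMr // mulrAC ler_pdivlMr // => H.
  set a := q.1 d in H qd qd' *; set b := p.1 d in H pd *.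
  rewrite mulrBl mulrBl; nra.
exists (fun j => if j == d then t else g j) => p Hp.
rewrite /sat lhs_ext.
case: (ltrgtP 0 (p.1 d)) => Hd.
- have Hpp : List.In p pos by apply/List.filter_In.
  have : t <= U p.
    apply: maxl_le; first by apply: minl_le; apply: List.in_map.
    move=> u /List.in_map_iff [q [<- Hq]]; exact: LU.
  rewrite /U ler_pdivlMr // => H; nra.
- have Hqq : List.In p neg by apply/List.filter_In.
  have : L p <= t by apply: maxl_ge; apply: List.in_map.
  have qd' : 0 < - p.1 d by rewrite oppr_gt0.
  rewrite /L ler_pdivrMr // => H; nra.
- rewrite -Hd mul0r addr0; apply: (Hg p); rewrite /newsys List.in_app_iff; left.
  by apply/List.filter_In; rewrite -Hd eqxx.
Qed.

Lemma farkas d (l : seq cstr) :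
  ~ (exists g, forall p, List.In p l -> sat d g p) ->
  exists p, cone l p /\ (forall j, (j < d)%N -> p.1 j = 0) /\ p.2 < 0.
Proof.
elim: d l => [|d IH] l Hinf.
  have [p [Hp Hn]] : exists p, List.In p l /\ ~ sat 0 (fun _ => 0) p.
    apply: Classical_Prop.NNPP => H; apply: Hinf; exists (fun _ => 0) => p Hp.
    apply: Classical_Prop.NNPP => Hs; apply: H; by exists p.
  exists p; split; first exact: cone_in.
  split=> // ; move: Hn; rewrite /sat /lhs big_ord0 => /negP; by rewrite -ltNge.
have Hinf' : ~ (exists g, forall p, List.In p (newsys d l) -> sat d g p).
  by case=> g /extend Hg; apply: Hinf.
have [p [Hp [Hz Hc]]] := IH _ Hinf'.
have [Hp' Hd] := cone_newsys Hp.
exists p; split=> //; split=> // j; rewrite ltnS leq_eqVlt => /orP[/eqP->//|]; exact: Hz.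
Qed.

End Farkas.

Section App.
Variables (R : realType) (n m : nat).

Definition vec (f : {ffun 'I_n -> bool}) : 'cV[R]_n := \col_i (f i)%:R.
Definition pb (P : Prop) : bool :=
  if ClassicalEpsilon.excluded_middle_informative P then true else false.
Lemma pbE P : pb P <-> P.
Proof. by rewrite /pb; case: ClassicalEpsilon.excluded_middle_informative. Qed.

Lemma In_seq (T : eqType) (x : T) (s : seq T) : x \in s -> List.In x s.
Proof. elim: s => //= a s IH; rewrite in_cons => /orP[/eqP->|/IH]; by [left|right]. Qed.

Lemma binvec (S : 'cV[R]_n -> Prop) x : binary_set S -> S x ->
  x = vec [ffun i => x i 0 == 1].
Proof.
move=> Hb Sx; apply/matrixP => i j; rewrite (ord1 j) mxE ffunE.
by case: (Hb _ Sx i) => ->; rewrite ?eqxx // eq_sym oner_eq0.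
Qed.

Definition coefv (w : 'cV[R]_m) : nat -> R := fun j => oapp (fun i => w i 0) 0 (insub j).
Lemma coefvE w (i : 'I_m) : coefv w i = w i 0.
Proof. by rewrite /coefv valK. Qed.
Lemma lhs_coefv w g : lhs m (coefv w) g = \sum_(i < m) w i 0 * g i.
Proof. by apply: eq_bigr => i _; rewrite coefvE. Qed.

Lemma subcE k (w1 w2 : 'cV[R]_k) i : (w1 - w2) i 0 = w1 i 0 - w2 i 0.
Proof. by rewrite !mxE. Qed.

Lemma dotvB (u w x : 'cV[R]_n) : dotv u x - dotv w x = dotv (u - w) x.
Proof. rewrite /dotv -sumrB; apply: eq_bigr => i _; by rewrite subcE mulrBl. Qed.

Lemma dot_MT (M : 'M[R]_(m, n)) (x : 'cV[R]_n) (gam : 'cV[R]_m) :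
  dotv (M^T *m gam) x = \sum_(i < m) gam i 0 * (M *m x) i 0.
Proof.
rewrite /dotv.
rewrite (eq_bigr (fun j => \sum_(i < m) gam i 0 * (M i j * x j 0))); last first.
  move=> j _; rewrite mxE big_distrl; apply: eq_bigr => i _ /=; rewrite mxE; ring.
rewrite exchange_big; apply: eq_bigr => i _; rewrite mxE big_distrr //.
Qed.

Lemma dotv_sum K (a : 'I_K -> R) (p : 'I_K -> 'cV[R]_n) v :
  dotv v (\sum_(k < K) a k *: p k) = \sum_(k < K) a k * dotv v (p k).
Proof.
rewrite /dotv (eq_bigr (fun i => \sum_(k < K) a k * (v i 0 * p k i 0))); last first.
  move=> i _; rewrite summxE big_distrr; apply: eq_bigr => k _ /=. rewrite mxE mulrCA //.
rewrite exchange_big /=; apply: eq_bigr => k _; by rewrite big_distrr.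
Qed.

Lemma Mx_sum K (a : 'I_K -> R) (p : 'I_K -> 'cV[R]_n) (M : 'M[R]_(m, n)) i :
  (M *m \sum_(k < K) a k *: p k) i 0 = \sum_(k < K) a k * (M *m p k) i 0.
Proof.
rewrite mulmx_sumr summxE; apply: eq_bigr => k _; by rewrite -scalemxAr mxE.
Qed.


Variables (S : 'cV[R]_n -> Prop) (M : 'M[R]_(m, n)) (b : 'cV[R]_m) (v : 'cV[R]_n).

Definition cS Vs (s : 'cV[R]_n) : cstr R := (coefv (b - M *m s), Vs - dotv v s).
Definition cN (i : nat) : cstr R := ((fun j : nat => if j == i then -1 else 0 : R), 0 : R).
Definition syslist Vs : seq (cstr R) :=
  List.map (fun f => cS Vs (vec f))
    (List.filter (fun f => pb (S (vec f))) (enum {ffun 'I_n -> bool}))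
  ++ List.map cN (iota 0 m).

Definition Inv Vs (p : cstr R) := exists K (lam : 'I_K -> R) (pts : 'I_K -> 'cV[R]_n)
  (mu : 'I_m -> R),
  [/\ (forall k, 0 <= lam k), (forall k, S (pts k)), (forall i, 0 <= mu i),
    (forall i : 'I_m, p.1 i = \sum_(k < K) lam k * (b - M *m pts k) i 0 - mu i) &
    p.2 = \sum_(k < K) lam k * (Vs - dotv v (pts k))].

Lemma inv_cone Vs p : cone (syslist Vs) p -> Inv Vs p.
Proof.
elim=> {p} [p|p q _ [K1 [l1 [p1 [u1 [H1 H2 H3 H4 H5]]]]] _ [K2 [l2 [p2 [u2 [G1 G2 G3 G4 G5]]]]]
  |a p a0 _ [K1 [l1 [p1 [u1 [H1 H2 H3 H4 H5]]]]]].
- rewrite /syslist List.in_app_iff; case.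
    case/List.in_map_iff => f [<- /List.filter_In [_ /pbE Sf]].
    exists 1%N, (fun _ => 1), (fun _ => vec f), (fun _ => 0); split.
    + by [].
    + by [].
    + by [].
    + by move=> i; rewrite /cS /= coefvE big_ord1 mul1r subr0.
    + by rewrite /cS /= big_ord1 mul1r.
  case/List.in_map_iff => i0 [<- _].
  exists 0%N, (fun _ => 0), (fun _ => 0), (fun i : 'I_m => if (i : nat) == i0 then 1 else 0).
  split.
  + by [].
  + by case.
  + by move=> i; case: ifP.
  + by move=> i; rewrite /cN /= big_ord0 sub0r; case: ifP => _; rewrite ?oppr0.
  + by rewrite /cN /= big_ord0.
- have sl : forall k, split (lshift K2 k) = inl k := fun k => unsplitK (inl _ k).
  have sr : forall k, split (rshift K1 k) = inr k := fun k => unsplitK (inr _ k).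
  exists (K1 + K2)%N,
    (fun k => match split k with inl k1 => l1 k1 | inr k2 => l2 k2 end),
    (fun k => match split k with inl k1 => p1 k1 | inr k2 => p2 k2 end),
    (fun i => u1 i + u2 i).
  split.
  + by move=> k; case: split.
  + by move=> k; case: split.
  + by move=> i; rewrite addr_ge0.
  + move=> i /=; rewrite big_split_ord /=.
    under eq_bigr do rewrite sl. under [X in _ + X - _]eq_bigr do rewrite sr.
    rewrite H4 G4; ring.
  + rewrite /= big_split_ord /=.
    under eq_bigr do rewrite sl. under [X in _ = _ + X]eq_bigr do rewrite sr.
    by rewrite H5 G5.
- exists K1, (fun k => a * l1 k), p1, (fun i => a * u1 i); split.
  + by move=> k; rewrite mulr_ge0.
  + by [].
  + by move=> i; rewrite mulr_ge0.
  + move=> i /=; rewrite H4 mulrBr big_distrr /=; congr (_ - _).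
    by apply: eq_bigr => k _; rewrite mulrA.
  + by rewrite /= H5 big_distrr; apply: eq_bigr => k _ /=; rewrite mulrA.
Qed.


Lemma from_dual Vs xs (gam : 'cV[R]_m) : S xs -> polyhedron M b xs -> dotv v xs = Vs ->
  (forall y, S y /\ polyhedron M b y -> dotv v y <= Vs) ->
  (forall i, 0 <= gam i 0) ->
  (forall s, S s -> \sum_(i < m) (b - M *m s) i 0 * gam i 0 <= Vs - dotv v s) ->
  forall xbar, is_argmax (fun y => S y /\ polyhedron M b y) v xbar <->
   ((S xbar /\ polyhedron M b xbar) /\ polyEq M b gam xbar /\
    is_argmax S (v - M^T *m gam) xbar).
Proof.
move=> Sxs Pxs Exs HVs Hg HD xbar.
pose G (x : 'cV[R]_n) := \sum_(i < m) gam i 0 * (M *m x) i 0.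
pose Gb := \sum_(i < m) gam i 0 * b i 0.
have Ea : forall x, dotv (v - M^T *m gam) x = dotv v x - G x.
  by move=> x; rewrite -dotvB dot_MT.
have Eb : forall x, \sum_(i < m) (b - M *m x) i 0 * gam i 0 = Gb - G x.
  move=> x; rewrite /Gb /G -sumrB; apply: eq_bigr => i _; rewrite subcE; ring.
have Ec : forall x, polyhedron M b x -> G x <= Gb.
  move=> x Px; apply: ler_sum => i _; rewrite ler_wpM2l //; exact: Px.
split.
- case=> HX Hopt.
  have Ev : dotv v xbar = Vs by apply/le_anti; rewrite HVs //= -Exs; exact: Hopt.
  have D := HD xbar (proj1 HX); rewrite Eb Ev in D.
  have EG : G xbar = Gb.
    apply/le_anti; rewrite (Ec _ (proj2 HX)) /=. by move: D; rewrite subrr subr_le0.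
  split; first exact: HX. split.
  + move=> i gi.
    have Z : \sum_(i < m) gam i 0 * (b i 0 - (M *m xbar) i 0) = 0.
      rewrite (eq_bigr (fun i => gam i 0 * b i 0 - gam i 0 * (M *m xbar) i 0)).
        by rewrite sumrB -/Gb -/(G xbar) EG subrr.
      by move=> j _; rewrite mulrBr.
    have Hnn : forall j, 0 <= gam j 0 * (b j 0 - (M *m xbar) j 0).
      by move=> j; rewrite mulr_ge0 // subr_ge0 (proj2 HX).
    have := psumr_eq0P (P := predT) (fun j _ => Hnn j) Z (i := i) isT.
    move/eqP; rewrite mulf_eq0 (negbTE gi) /= subr_eq0 => /eqP ->.
    by [].
  + split; first exact: (proj1 HX).
    move=> y Sy; rewrite !Ea; have := HD y Sy; rewrite Eb; lra.
- case=> [HX [HCS [_ Hmax]]]; split=> // y HY.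
  have EG : G xbar = Gb.
    apply: eq_bigr => i _; case: (eqVneq (gam i 0) 0) => [->|/HCS ->]; by rewrite ?mul0r.
  have := Hmax y (proj1 HY); rewrite !Ea; have := Ec y (proj2 HY); lra.
Qed.

Lemma contra Vs p : (forall y, S y /\ polyhedron M b y -> dotv v y <= Vs) ->
 (forall x, conv (fun y => S y /\ polyhedron M b y) x <-> conv S x /\ polyhedron M b x) ->
 Inv Vs p -> (forall j, (j < m)%N -> p.1 j = 0) -> p.2 < 0 -> False.
Proof.
move=> HVs Hconv [K [lam [pts [mu [Hl HS Hmu H1 H2]]]]] Hz Hc.
set L := \sum_(k < K) lam k.
have L0 : 0 <= L by apply: sumr_ge0.
have Lp : 0 < L.
  rewrite lt_def L0 andbT; apply/eqP => L00.
  have lam0 : forall k, lam k = 0.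
    by move=> k; apply: (psumr_eq0P (P := predT) _ L00) => // j _; exact: Hl.
  by move: Hc; rewrite H2 big1 ?ltxx // => k _; rewrite lam0 mul0r.
set x := \sum_(k < K) (lam k / L) *: pts k.
have Hdx : dotv v x = (\sum_(k < K) lam k * dotv v (pts k)) / L.
  by rewrite dotv_sum big_distrl; apply: eq_bigr => k _ /=; rewrite mulrAC.
have HMx : forall i, (M *m x) i 0 = (\sum_(k < K) lam k * (M *m pts k) i 0) / L.
  by move=> i; rewrite Mx_sum big_distrl; apply: eq_bigr => k _ /=; rewrite mulrAC.
have HP : polyhedron M b x.
  move=> i; rewrite HMx ler_pdivrMr //.
  have := H1 i; rewrite Hz // => E.
  have E2 : \sum_(k < K) lam k * (b - M *m pts k) i 0 =
            b i 0 * L - \sum_(k < K) lam k * (M *m pts k) i 0.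
    rewrite /L big_distrr -sumrB; apply: eq_bigr => k _; rewrite subcE /=; ring.
  have := Hmu i; lra.
have HC : conv S x.
  exists K, (fun k => lam k / L), pts; split; first by move=> k; rewrite divr_ge0 // ltW.
  split; first by rewrite -big_distrl /= divff // gt_eqF.
  by split.
have [k' [lam' [pts' [Hl' [Hs' [HX' Hx']]]]]] := proj2 (Hconv x) (conj HC HP).
have : dotv v x <= Vs.
  rewrite Hx' dotv_sum; apply: (@le_trans _ _ (\sum_(k < k') lam' k * Vs)).
    by apply: ler_sum => k _; rewrite ler_wpM2l //; exact: HVs.
  by rewrite -big_distrl /= Hs' mul1r.
rewrite Hdx ler_pdivrMr //.
have E3 : p.2 = Vs * L - \sum_(k < K) lam k * dotv v (pts k).
  by rewrite H2 /L big_distrr -sumrB; apply: eq_bigr => k _ /=; rewrite mulrBr (mulrC Vs).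
lra.
Qed.

End App.

Unset Implicit Arguments.

Theorem proposition9 (R : realType) (n m : nat)
  (S : 'cV[R]_n -> Prop) (M : 'M[R]_(m, n)) (b : 'cV[R]_m) :
  binary_set S -> comonotone S ->
  (forall x, conv (fun y => S y /\ polyhedron M b y) x <-> conv S x /\ polyhedron M b x) ->
  forall v : 'cV[R]_n,
  exists gamma : 'cV[R]_m, (forall i, 0 <= gamma i 0) /\
    forall xbar : 'cV[R]_n,
      is_argmax (fun y => S y /\ polyhedron M b y) v xbar <->
      ((S xbar /\ polyhedron M b xbar) /\ polyEq M b gamma xbar /\
       is_argmax S (v - M^T *m gamma) xbar).
Proof.
move=> Hbin _ Hconv v.
case: (Classical_Prop.classic (exists x0, S x0 /\ polyhedron M b x0)) => [[x0 Hx0]|Hno];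
  last first.
  exists 0; split=> [i|xbar]; first by rewrite mxE.
  by split=> [[HX _]|[HX _]]; exfalso; apply: Hno; exists xbar.
pose F := fun f : {ffun 'I_n -> bool} => dotv v (vec R f).
pose P := fun f => pb (S (vec R f) /\ polyhedron M b (vec R f)).
pose f0 := [ffun i => x0 i 0 == 1].
have Pf0 : P f0 by apply/pbE; rewrite -(binvec Hbin (proj1 Hx0)).
have [fs Pfs Hmax] := arg_maxP F Pf0.
have Hxs : S (vec R fs) /\ polyhedron M b (vec R fs) by apply/pbE.
set Vs := dotv v (vec R fs).
have HVs : forall y, S y /\ polyhedron M b y -> dotv v y <= Vs.
  move=> y Hy; rewrite (binvec Hbin (proj1 Hy)); apply: Hmax.
  by apply/pbE; rewrite -(binvec Hbin (proj1 Hy)).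
case: (Classical_Prop.classic
  (exists g, forall p, List.In p (syslist S M b v Vs) -> sat m g p)) => [[g Hg]|Hinf].
  exists (\col_(i < m) g i).
  have Hnn : forall i, 0 <= (\col_(i < m) g i) i 0.
    move=> i; rewrite mxE.
    have : sat m g (cN R i).
      apply: Hg; rewrite /syslist List.in_app_iff; right; apply: List.in_map.
      by apply/In_seq; rewrite mem_iota add0n ltn_ord.
    rewrite /sat /lhs /= (bigD1 i) //= eqxx big1 ?addr0; first by rewrite mulN1r oppr_le0.
    by move=> j /negbTE; rewrite -val_eqE /= => ->; rewrite mul0r.
  split=> //; apply: (from_dual (proj1 Hxs) (proj2 Hxs) (erefl Vs) HVs Hnn) => s Hs.
  have : sat m g (cS M b v Vs s).
    apply: Hg; rewrite /syslist List.in_app_iff; left.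
    rewrite [s in cS _ _ _ _ s](binvec Hbin Hs); apply: List.in_map.
    apply/List.filter_In; split; first by apply/In_seq; rewrite mem_enum.
    by apply/pbE; rewrite -(binvec Hbin Hs).
  rewrite /sat lhs_coefv /= => H; apply: le_trans H; rewrite le_eqVlt; apply/orP; left.
  by apply/eqP; apply: eq_bigr => i _; rewrite mxE.
exfalso.
have [p [Hp [Hz Hc]]] := farkas Hinf.
exact: (contra HVs Hconv (inv_cone Hp) Hz Hc).
Qed.
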